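(* For all integers $k\geq 1$ and $n\geq 3$, $\chi_i(C_{3k}\Box C_n)\leq 6$.
   Context: For a graph $G$, an incidence is a pair $(v,e)$ with $v\in V(G)$, $e\in E(G)$ and $v$ incident with $e$. Two incidences $(v,e)$ and $(w,f)$ are adjacent if $v=w$, or $e=f$, or the edge $vw$ equals $e$ or $f$. An incidence $k$-coloring of $G$ is a map from the set of incidences of $G$ to a set of $k$ colors such that adjacent incidences receive distinct colors; the incidence chromatic number $\chi_i(G)$ is the least such $k$. $C_n$ denotes the cycle on $n$ vertices and $\Box$ the Cartesian product of graphs: $G\Box H$ has vertex set $V(G)\times V(H)$, with $(u_1,v_1)$ adjacent to $(u_2,v_2)$ iff either $u_1=u_2$ and $v_1v_2\in E(H)$, or $v_1=v_2$ and $u_1u_2\in E(G)$. *)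

(* Defs.v *)
From mathcomp Require Import all_boot.
Set Implicit Arguments. Unset Strict Implicit. Unset Printing Implicit Defensive.

(* An incidence (v, vw) is encoded as the ordered pair (v, w) with e v w:
   the vertex v together with the edge {v, w}. *)
Definition incidence (T : finType) (e : rel T) (p : T * T) : bool := e p.1 p.2.

Definition inc_adj (T : finType) (e : rel T) (p q : T * T) : bool :=
  let: (v, w) := p in let: (u, z) := q in
  [|| v == u,
      ([set v; w] == [set u; z] :> {set T}),
      (e v u && ([set v; u] == [set v; w] :> {set T})) |
      (e v u && ([set v; u] == [set u; z] :> {set T}))].

Definition incidence_coloring (T : finType) (e : rel T) (k : nat)
    (c : T * T -> 'I_k) : Prop :=
  forall p q, incidence e p -> incidence e q -> p != q ->
    inc_adj e p q -> c p != c q.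

(* chi_i(G) <= k  iff  G admits an incidence k-coloring
   (chi_i is the least such k, so this is the meaning of the bound). *)
Definition inc_colorable (T : finType) (e : rel T) (k : nat) : Prop :=
  exists c : T * T -> 'I_k, incidence_coloring e c.

Definition cycle_adj (m : nat) : rel 'I_m :=
  fun i j => (j == (i.+1 %% m) :> nat) || (i == (j.+1 %% m) :> nat).

Definition box_adj (A B : finType) (ea : rel A) (eb : rel B) : rel (A * B) :=
  fun x y => ((x.1 == y.1) && eb x.2 y.2) || ((x.2 == y.2) && ea x.1 y.1).

Definition cyc_box_adj (m n : nat) : rel ('I_m * 'I_n) :=
  box_adj (@cycle_adj m) (@cycle_adj n).

(* Main.v *)
Require Import Defs.
From mathcomp Require Import all_boot zify.

Definition tbl : seq nat := [:: 0; 1; 2; 3; 1; 4; 2; 5; 4; 0; 5; 2; 1; 5; 3; 4; 4; 0; 5; 3; 0; 1; 2; 3; 5; 2; 4; 0; 2; 3; 0; 1; 3; 4; 1; 5; 0; 2; 5; 1; 1; 3; 2; 4; 3; 5; 4; 0; 1; 0; 2; 3; 4; 5; 3; 0; 5; 2; 3; 1; 3; 5; 1; 4; 5; 0; 4; 2; 2; 1; 0; 4; 5; 0; 4; 2; 2; 1; 0; 3; 3; 4; 1; 5; 0; 2; 5; 1; 1; 3; 2; 4; 3; 5; 4; 0; 1; 4; 2; 3; 3; 5; 4; 0; 5; 2; 0; 1; 4; 1; 3; 0; 0; 5; 3; 2; 2; 4; 5; 3; 0; 4; 1; 5; 5; 2; 4; 1; 2; 3; 0; 1; 5; 0; 4;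 2; 2; 1; 0; 3; 3; 4; 1; 5].

Definition F (t r d : nat) : nat := nth 0 tbl (r * 12 + t * 4 + d).

Definition base (n : nat) : nat := if n %% 3 == 0 then n else n - n %% 3 - 3.
Definition off (n : nat) : nat := if n %% 3 == 1 then 3 else 7.
Definition rt (n j : nat) : nat := if j < base n then j %% 3 else off n + (j - base n).

Definition pairs : seq (nat * nat) :=
  [:: (0,1);(1,2);(2,0);(2,3);(3,4);(4,5);(5,6);(6,0);(6,3);
      (2,7);(7,8);(8,9);(9,10);(10,11);(11,0);(11,7)].
Definition pairb (a b : nat) : bool := (a, b) \in pairs.

Definition outokb : bool :=
  all (fun t => all (fun r => all (fun d => all (fun d' =>
    (d == d') || (F t r d != F t r d')) (iota 0 4)) (iota 0 4)) (iota 0 12)) (iota 0 3).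
Definition hokb : bool :=
  all (fun t => all (fun r => all (fun d' =>
    (F t r 0 != F ((t.+1) %% 3) r d') && (F ((t.+1) %% 3) r 1 != F t r d'))
    (iota 0 4)) (iota 0 12)) (iota 0 3).
Definition vokb : bool :=
  all (fun ab => all (fun t => all (fun d' =>
    (F t ab.1 2 != F t ab.2 d') && (F t ab.2 3 != F t ab.1 d'))
    (iota 0 4)) (iota 0 3)) pairs.

Lemma outokb_true : outokb. Proof. by vm_compute. Qed.
Lemma hokb_true : hokb. Proof. by vm_compute. Qed.
Lemma vokb_true : vokb. Proof. by vm_compute. Qed.
Lemma tbl_lt6 : all (fun x => x < 6) tbl. Proof. by vm_compute. Qed.

Lemma iotaP a n : a < n -> a \in iota 0 n.
Proof. by rewrite mem_iota. Qed.
Arguments iotaP {a n}.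

Lemma F_lt6 t r d : F t r d < 6.
Proof.
rewrite /F; case: (ltnP (r * 12 + t * 4 + d) (size tbl)) => h.
  by apply: (allP tbl_lt6); apply: mem_nth.
by rewrite nth_default.
Qed.

Lemma outok t r d d' : t < 3 -> r < 12 -> d < 4 -> d' < 4 -> d != d' ->
  F t r d != F t r d'.
Proof.
move=> ht hr hd hd' hne.
have /allP H0 := outokb_true.
have /allP H1 := H0 t (iotaP ht).
have /allP H2 := H1 r (iotaP hr).
have /allP H3 := H2 d (iotaP hd).
have H4 := H3 d' (iotaP hd').
by move: H4; rewrite (negbTE hne).
Qed.

Lemma hok t r d' : t < 3 -> r < 12 -> d' < 4 ->
  (F t r 0 != F ((t.+1) %% 3) r d') && (F ((t.+1) %% 3) r 1 != F t r d').
Proof.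
move=> ht hr hd'.
have /allP H0 := hokb_true.
have /allP H1 := H0 t (iotaP ht).
have /allP H2 := H1 r (iotaP hr).
exact: (H2 d' (iotaP hd')).
Qed.

Lemma vok a b t d' : pairb a b -> t < 3 -> d' < 4 ->
  (F t a 2 != F t b d') && (F t b 3 != F t a d').
Proof.
move=> hab ht hd'.
have /allP H0 := vokb_true.
have /allP H1 := H0 (a, b) hab.
have /allP H2 := H1 t (iotaP ht).
exact: (H2 d' (iotaP hd')).
Qed.

Lemma modS x m : x < m -> x.+1 %% m = if x.+1 == m then 0 else x.+1.
Proof.
move=> h; case: eqP => [->|ne]; first by rewrite modnn.
by rewrite modn_small //; lia.
Qed.

Lemma pair_mod j : pairb (j %% 3) (j.+1 %% 3).
Proof.
have : j %% 3 = 0 \/ j %% 3 = 1 \/ j %% 3 = 2 by lia.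
case=> [h|[h|h]].
- by rewrite h (_ : j.+1 %% 3 = 1) //; lia.
- by rewrite h (_ : j.+1 %% 3 = 2) //; lia.
- by rewrite h (_ : j.+1 %% 3 = 0) //; lia.
Qed.

Lemma pair_off3 x : x < 3 -> pairb (3 + x) (3 + x.+1).
Proof. by case: x => [|[|[|x]]]. Qed.
Lemma pair_off7 x : x < 4 -> pairb (7 + x) (7 + x.+1).
Proof. by case: x => [|[|[|[|x]]]]. Qed.

Lemma rt_lt12 n j : j < n -> rt n j < 12.
Proof.
rewrite /rt /base /off => hj.
case: ifP => h1; first by lia.
have : n %% 3 = 0 \/ n %% 3 = 1 \/ n %% 3 = 2 by lia.
case=> [h|[h|h]]; rewrite h /= in h1 *; lia.
Qed.

Lemma pair_rt n j : 3 <= n -> j < n -> pairb (rt n j) (rt n (j.+1 %% n)).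
Proof.
move=> hn hj; rewrite modS //.
have : n %% 3 = 0 \/ n %% 3 = 1 \/ n %% 3 = 2 by lia.
rewrite /rt /base /off.
case=> [h|[h|h]]; rewrite h /=.
- rewrite hj; case: eqP => e.
    have -> : 0 < n by lia.
    have -> : j %% 3 = 2 by lia.
    by [].
  have -> : j.+1 < n by lia.
  exact: pair_mod.
- case: eqP => e.
    have -> : (j < n - 1 - 3) = false by lia.
    have -> : j - (n - 1 - 3) = 3 by lia.
    by case: ifP.
  case: (ltnP j.+1 (n - 1 - 3)) => h2.
    have -> : j < n - 1 - 3 by lia.
    exact: pair_mod.
  case: (ltnP j (n - 1 - 3)) => h3.
    have -> : j %% 3 = 2 by lia.
    have -> : j.+1 - (n - 1 - 3) = 0 by lia.
    by [].
  have -> : j.+1 - (n - 1 - 3) = (j - (n - 1 - 3)).+1 by lia.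
  apply: pair_off3; lia.
- case: eqP => e.
    have -> : (j < n - 2 - 3) = false by lia.
    have -> : j - (n - 2 - 3) = 4 by lia.
    by case: ifP.
  case: (ltnP j.+1 (n - 2 - 3)) => h2.
    have -> : j < n - 2 - 3 by lia.
    exact: pair_mod.
  case: (ltnP j (n - 2 - 3)) => h3.
    have -> : j %% 3 = 2 by lia.
    have -> : j.+1 - (n - 2 - 3) = 0 by lia.
    by [].
  have -> : j.+1 - (n - 2 - 3) = (j - (n - 2 - 3)).+1 by lia.
  apply: pair_off7; lia.
Qed.

Definition dirv m n (v w : 'I_m * 'I_n) : nat :=
  if v.1 == w.1 then (if (w.2 : nat) == v.2.+1 %% n then 2 else 3)
  else (if (w.1 : nat) == v.1.+1 %% m then 0 else 1).

Arguments dirv {m n}.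

Lemma succ_cases {x y m} : x < m -> y = x.+1 %% m -> (x.+1 < m /\ y = x.+1) \/ (x.+1 = m /\ y = 0).
Proof. move=> h ->; rewrite modS //; case: eqP => e; [right|left]; lia. Qed.

Lemma nbr m n (v w : 'I_m * 'I_n) : 3 <= m -> 3 <= n -> cyc_box_adj v w ->
  [/\ dirv v w = 0, (v.2 : nat) = w.2 & (w.1 : nat) = v.1.+1 %% m] \/
  [/\ dirv v w = 1, (v.2 : nat) = w.2 & (v.1 : nat) = w.1.+1 %% m] \/
  [/\ dirv v w = 2, (v.1 : nat) = w.1 & (w.2 : nat) = v.2.+1 %% n] \/
  [/\ dirv v w = 3, (v.1 : nat) = w.1 & (v.2 : nat) = w.2.+1 %% n].
Proof.
case: v w => [a b] [c d] hm hn.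
rewrite /cyc_box_adj /box_adj /cycle_adj /dirv /=.
have ha := ltn_ord a; have hb := ltn_ord b; have hc := ltn_ord c; have hd := ltn_ord d.
case/orP => /andP [/eqP e1 h].
- subst c; rewrite eqxx.
  case/orP: h => /eqP h.
    by rewrite h eqxx; right; right; left.
  have -> : ((d : nat) == b.+1 %% n) = false.
    apply/negbTE/eqP => h2.
    case: (succ_cases hd h) => [[? ?]|[? ?]]; case: (succ_cases hb h2) => [[? ?]|[? ?]]; lia.
  by right; right; right.
- subst d.
  have -> : (a == c) = false.
    apply/negbTE/eqP => h2; subst c.
    case/orP: h => /eqP h; case: (succ_cases ha h) => [[? ?]|[? ?]]; lia.
  case/orP: h => /eqP h.
    by rewrite h eqxx; left.
  have -> : ((c : nat) == a.+1 %% m) = false.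
    apply/negbTE/eqP => h2.
    case: (succ_cases hc h) => [[? ?]|[? ?]]; case: (succ_cases ha h2) => [[? ?]|[? ?]]; lia.
  by right; left.
Qed.

Arguments nbr {m n v w}.
Arguments hok {t r d'}.
Arguments vok {a b t d'}.

Lemma dir_lt4 m n (v w : 'I_m * 'I_n) : dirv v w < 4.
Proof. by rewrite /dirv; case: ifP; case: ifP. Qed.

Ltac fin := repeat match goal with
  | H : (nat_of_ord ?x) = (nat_of_ord ?y).+1 %% _ |- _ =>
      move: (succ_cases (ltn_ord y) H) => {H} [[? ?]|[? ?]]
  end; lia.

Lemma dir_inj m n (v w z : 'I_m * 'I_n) : 3 <= m -> 3 <= n ->
  cyc_box_adj v w -> cyc_box_adj v z -> dirv v w = dirv v z -> w = z.
Proof.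
move=> hm hn hw hz hd.
case: (nbr hm hn hw) => [[d1 e1 f1]|[[d1 e1 f1]|[[d1 e1 f1]|[d1 e1 f1]]]];
case: (nbr hm hn hz) => [[d2 e2 f2]|[[d2 e2 f2]|[[d2 e2 f2]|[d2 e2 f2]]]];
rewrite d1 d2 in hd; try discriminate;
move: hw hz d1 d2 e1 e2 f1 f2 hd; case: v w z => [a b] [c d] [c' d'] /= _ _ _ _ e1 e2 f1 f2 _;
have ha := ltn_ord a; have hb := ltn_ord b; have hc := ltn_ord c; have hd := ltn_ord d;
have hc' := ltn_ord c'; have hd' := ltn_ord d';
(have E1 : (c : nat) = c' by fin); (have E2 : (d : nat) = d' by fin);
by rewrite (val_inj E1) (val_inj E2).
Qed.

Lemma inlem m n (u v : 'I_m * 'I_n) d' : 3 <= m -> m %% 3 = 0 -> 3 <= n ->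
  cyc_box_adj u v -> d' < 4 ->
  F (u.1 %% 3) (rt n u.2) (dirv u v) != F (v.1 %% 3) (rt n v.2) d'.
Proof.
move=> hm hm3 hn huv hd'.
have ht : forall x, x %% 3 < 3 by move=> x; rewrite ltn_pmod.
have hr : forall x : 'I_n, rt n x < 12 by move=> x; apply: rt_lt12.
have hu1 := ltn_ord u.1; have hv1 := ltn_ord v.1.
case: (nbr hm hn huv) => [[d1 e1 f1]|[[d1 e1 f1]|[[d1 e1 f1]|[d1 e1 f1]]]]; rewrite d1.
- have -> : v.1 %% 3 = (u.1 %% 3).+1 %% 3 by fin.
  rewrite -e1; exact: (andP (hok (ht _) (hr _) hd')).1.
- have -> : u.1 %% 3 = (v.1 %% 3).+1 %% 3 by fin.
  rewrite e1; exact: (andP (hok (ht _) (hr _) hd')).2.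
- rewrite e1.
  have hp : pairb (rt n u.2) (rt n v.2) by rewrite f1; apply: pair_rt.
  exact: (andP (vok hp (ht _) hd')).1.
- rewrite e1.
  have hp : pairb (rt n v.2) (rt n u.2) by rewrite f1; apply: pair_rt.
  exact: (andP (vok hp (ht _) hd')).2.
Qed.

Definition col m n (p : ('I_m * 'I_n) * ('I_m * 'I_n)) : 'I_6 :=
  inord (F (p.1.1 %% 3) (rt n p.1.2) (dirv p.1 p.2)).

Lemma inord_neq a b : a < 6 -> b < 6 -> a != b -> (inord a : 'I_6) != inord b.
Proof.
move=> ha hb; apply: contra => /eqP /(congr1 val) /=.
by rewrite !inordK // => ->.
Qed.

Lemma adj_cases (T : finType) (e : rel T) (v w u z : T) :
  inc_adj e (v, w) (u, z) -> v = u \/ u = w \/ z = v.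
Proof.
rewrite /inc_adj; case/or4P.
- by move/eqP; left.
- move/eqP=> hs.
  have : u \in [set v; w] by rewrite hs set21.
  rewrite in_set2 => /orP[/eqP ->|/eqP ->]; [by left|by right; left].
- move/andP=> [_ /eqP hs].
  have : u \in [set v; w] by rewrite -hs set22.
  rewrite in_set2 => /orP[/eqP ->|/eqP ->]; [by left|by right; left].
- move/andP=> [_ /eqP hs].
  have : v \in [set u; z] by rewrite -hs set21.
  rewrite in_set2 => /orP[/eqP ->|/eqP ->]; [by left|by right; right].
Qed.

Arguments adj_cases {T e v w u z}.
Arguments dir_inj {m n v w z}.
Arguments inlem {m n u v d'}.

Theorem lemma1 (k n : nat) : 1 <= k -> 3 <= n ->
  inc_colorable (@cyc_box_adj (3 * k) n) 6.
Proof.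
move=> hk hn.
have hm : 3 <= 3 * k by lia.
have hm3 : (3 * k) %% 3 = 0 by lia.
exists (@col (3 * k) n).
move=> [v w] [u z] hvw huz hne hadj.
rewrite /incidence /= in hvw huz.
rewrite /col /=.
apply: inord_neq; try exact: F_lt6.
case: (adj_cases hadj) => [E|[E|E]]; subst.
- apply: outok; try exact: dir_lt4; try exact: ltn_pmod.
    exact: rt_lt12.
  apply/eqP => hd; move: hne; rewrite (dir_inj hm hn hvw huz hd) eqxx.
  by [].
- by apply: inlem => //; exact: dir_lt4.
- by rewrite eq_sym; apply: inlem => //; exact: dir_lt4.
Qed.
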